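(* Let $(l_n)$ and $(i_n)$ be integer sequences with $1\le l_n\le n$ and $1\le i_n\le n$, such that $l_n/n\to t\in(0,1]$ and $i_n/n\to x\in[0,1]$ with $t\ne x$. Then $$C(n,l_n,i_n)\longrightarrow C(t,x)\qquad(n\to\infty).$$
   Context: Let $H_j=\sum_{i=1}^j1/i$, $a(0,0)=0$ and $a(n,l)=2n+2(n+1)H_n-2(n+3-l)H_{n+1-l}-6l+6$ for $1\le l\le n$ (this is the expected number of comparisons of Quicksort on the fly on $n$ items until the $l$-th smallest is found). For $n\ge1$, $1\le i\le n$ and $1\le l\le n$, $C(n,l,i)=\frac1n\Big(n-1-a(n,l)+\mathbf 1_{l<i}\,a(i-1,l)+\mathbf 1_{l\ge i}\,a(i-1,i-1)+\mathbf 1_{l>i}\,a(n-i,l-i)\Big)$. $C(x)=1+2x\ln x+2(1-x)\ln(1-x)$ for $x\in[0,1]$ (with $0\ln0=0$) and $C(t,x)=C(x)+2\,\mathbf 1_{t<x}\big(-1+x+(1-t)\ln(1-t)-(1-x)\ln(1-x)-(x-t)\ln(x-t)\big)$ for $t,x\in[0,1]$. *)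

(* Defs.v *)
From Stdlib Require Import Reals Lra.
Open Scope R_scope.

Fixpoint H (j : nat) : R :=
  match j with
  | O => 0
  | S k => H k + / INR (S k)
  end.

(* a(0,0) = 0 and, for 1 <= l <= n,
   a(n,l) = 2n + 2(n+1)H_n - 2(n+3-l)H_{n+1-l} - 6l + 6.
   (Values outside these ranges are never used by C(n,l,i).) *)
Definition a (n l : nat) : R :=
  match n with
  | O => 0
  | _ => 2 * INR n + 2 * (INR n + 1) * H n
         - 2 * (INR n + 3 - INR l) * H (n + 1 - l)%nat
         - 6 * INR l + 6
  end.

Definition ind (b : bool) : R := if b then 1 else 0.

Definition Cnli (n l i : nat) : R :=
  / INR n * (INR n - 1 - a n l
             + ind (Nat.ltb l i) * a (i - 1)%nat l
             + ind (Nat.leb i l) * a (i - 1)%nat (i - 1)%nat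
             + ind (Nat.ltb i l) * a (n - i)%nat (l - i)%nat).

Definition xlnx (y : R) : R := if Rle_dec y 0 then 0 else y * ln y.

Definition Cx (x : R) : R := 1 + 2 * xlnx x + 2 * xlnx (1 - x).

Definition Ctx (t x : R) : R :=
  Cx x + 2 * (if Rlt_dec t x then 1 else 0) *
         (-1 + x + xlnx (1 - t) - xlnx (1 - x) - xlnx (x - t)).

(* Main.v *)
Require Import Defs.
From Stdlib Require Import Reals Lra Lia Arith.
Open Scope R_scope.

Definition Sf (m : nat) : R := INR m * H m.

Lemma a_pos n l : (1 <= n)%nat -> a n l = 2 * INR n + 2 * (INR n + 1) * H n
         - 2 * (INR n + 3 - INR l) * H (n + 1 - l)%nat - 6 * INR l + 6.
Proof. intros; destruct n; [lia|reflexivity]. Qed.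

Lemma Sf_pred i : (1 <= i)%nat -> Sf i = INR i * H (i - 1)%nat + 1.
Proof.
  intros Hi; destruct i; [lia|]. replace (S i - 1)%nat with i by lia.
  unfold Sf. change (H (S i)) with (H i + / INR (S i)). assert (0 < INR (S i)) by (apply lt_0_INR; lia). field; lra.
Qed.

Lemma INR_pos n : (1 <= n)%nat -> 0 < INR n.
Proof. intros; apply lt_0_INR; lia. Qed.

Lemma caseA n l i : (1 <= l)%nat -> (l < i)%nat -> (i <= n)%nat ->
  Cnli n l i = (- INR n + 2 * INR i - 3
     + 2 * (Sf i + Sf (n + 1 - l) - Sf (n + 1) - Sf (i - l))
     + 4 * H (n + 1 - l) - 4 * H (i - l)) / INR n.
Proof.
  intros H1 H2 H3. unfold Cnli.
  replace (Nat.ltb l i) with true by (symmetry; apply Nat.ltb_lt; lia).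
  replace (Nat.leb i l) with false by (symmetry; apply Nat.leb_gt; lia).
  replace (Nat.ltb i l) with false by (symmetry; apply Nat.ltb_ge; lia).
  unfold Defs.ind.
  rewrite (a_pos n l) by lia. rewrite (a_pos (i-1) l) by lia.
  replace (i - 1 + 1 - l)%nat with (i - l)%nat by lia.
  rewrite (Sf_pred i) by lia. rewrite (Sf_pred (n+1)) by lia.
  replace (n + 1 - 1)%nat with n by lia.
  unfold Sf.
  rewrite (minus_INR i 1) by lia. rewrite !minus_INR by lia. rewrite !plus_INR.
  assert (Hn : 0 < INR n) by (apply INR_pos; lia). unfold Defs.ind. simpl INR. field. lra.
Qed.

Lemma a_diag i : (1 <= i)%nat -> a (i - 1) (i - 1) = -4 * (INR i - 1) + 2 * (Sf i - 1).
Proof.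
  intros Hi. rewrite (Sf_pred i) by lia.
  destruct (Nat.eq_dec i 1) as [->|Hne]. { simpl. lra. }
  rewrite a_pos by lia. replace (i - 1 + 1 - (i - 1))%nat with 1%nat by lia.
  rewrite minus_INR by lia. simpl H. simpl INR. field.
Qed.

Lemma caseB n l i : (1 <= i)%nat -> (i < l)%nat -> (l <= n)%nat ->
  Cnli n l i = (INR n + 1 + 2 * (Sf i + Sf (n + 1 - i) - Sf (n + 1))) / INR n.
Proof.
  intros H1 H2 H3. unfold Cnli.
  replace (Nat.ltb l i) with false by (symmetry; apply Nat.ltb_ge; lia).
  replace (Nat.leb i l) with true by (symmetry; apply Nat.leb_le; lia).
  replace (Nat.ltb i l) with true by (symmetry; apply Nat.ltb_lt; lia).
  unfold Defs.ind. rewrite a_diag by lia.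
  rewrite (a_pos n l) by lia. rewrite (a_pos (n-i) (l-i)) by lia.
  replace (n - i + 1 - (l - i))%nat with (n + 1 - l)%nat by lia.
  rewrite (Sf_pred (n+1-i)) by lia. rewrite (Sf_pred (n+1)) by lia.
  replace (n + 1 - 1)%nat with n by lia.
  replace (n + 1 - i - 1)%nat with (n - i)%nat by lia.
  rewrite !minus_INR by lia. rewrite !plus_INR.
  assert (Hn : 0 < INR n) by (apply INR_pos; lia). unfold Defs.ind. simpl INR. field. lra.
Qed.

Lemma ln_le_lin y : -1 < y -> ln (1 + y) <= y.
Proof.
  intros Hy. pose proof (exp_ineq1_le y) as He.
  destruct (Rle_lt_or_eq_dec _ _ He) as [Hlt|Heq].
  - left. rewrite <- (ln_exp y) at 2. apply ln_increasing; lra.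
  - rewrite Heq, ln_exp. lra.
Qed.

Lemma ln_le_m1 w : 0 < w -> ln w <= w - 1.
Proof. intros. replace w with (1 + (w - 1)) at 1 by ring. apply ln_le_lin; lra. Qed.

Lemma ln_0 : ln 0 = 0.
Proof. unfold ln. destruct (Rlt_dec 0 0) as [h|h]; [exfalso; apply (Rlt_irrefl 0); exact h|reflexivity]. Qed.

Lemma ln_mono x y : 0 < x -> x <= y -> ln x <= ln y.
Proof. intros. destruct (Rle_lt_or_eq_dec _ _ H0) as [h|h]; [left; apply ln_increasing; lra| subst; lra]. Qed.

Lemma H_S k : H (S k) = H k + / INR (S k).
Proof. reflexivity. Qed.

Lemma H_nonneg m : 0 <= H m.
Proof. induction m; [simpl; lra|]. rewrite H_S. assert (0 < INR (S m)) by (apply lt_0_INR; lia).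
 pose proof (Rinv_0_lt_compat _ H). lra. Qed.

Lemma H_ge_ln m : ln (INR m + 1) <= H m.
Proof.
  induction m. { simpl. replace (0+1) with 1 by ring. rewrite ln_1. lra. }
  rewrite H_S, S_INR. assert (Hp : 0 < INR m + 1) by (pose proof (pos_INR m); lra).
  replace (INR m + 1 + 1) with ((INR m + 1) * (1 + / (INR m + 1))) by (field; lra).
  rewrite ln_mult; [| lra | pose proof (Rinv_0_lt_compat _ Hp); lra].
  pose proof (ln_le_lin (/ (INR m + 1))). pose proof (Rinv_0_lt_compat _ Hp). 
  lra.
Qed.

Definition g (m : nat) : R := H m - ln (INR m).

Lemma g_nonneg m : 0 <= g m.
Proof.
  unfold g. destruct m. { simpl. rewrite ln_0. lra. }
  pose proof (H_ge_ln (S m)). assert (0 < INR (S m)) by (apply lt_0_INR; lia).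
  pose proof (ln_mono (INR (S m)) (INR (S m) + 1) H0 ltac:(lra)). lra.
Qed.

Lemma g_dec m : (1 <= m)%nat -> g (S m) <= g m.
Proof.
  intros Hm. unfold g. rewrite H_S, S_INR.
  assert (Hp : 0 < INR m) by (apply lt_0_INR; lia).
  replace (INR m) with ((INR m + 1) * (1 + - / (INR m + 1))) at 3 by (field; lra).
  assert (0 < / (INR m + 1) < 1). { split. apply Rinv_0_lt_compat; lra.
    rewrite <- Rinv_1. apply Rinv_lt_contravar; lra. }
  rewrite ln_mult; [| lra | lra].
  pose proof (ln_le_lin (- / (INR m + 1))). lra.
Qed.

Lemma g_le1 m : g m <= 1.
Proof.
  destruct m. { unfold g; simpl; rewrite ln_0; lra. }
  induction m. { unfold g. simpl. replace (0+1) with 1 by ring. rewrite ln_1. lra. }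
  pose proof (g_dec (S m) ltac:(lia)). lra.
Qed.

Lemma g_cv : exists g0, Un_cv g g0.
Proof.
  destruct (decreasing_cv (fun k => g (S k))) as [g0 Hg0].
  - intros k. apply g_dec. lia.
  - exists 0. intros r [k ->]. unfold opp_seq. pose proof (g_nonneg (S k)). lra.
  - exists g0. intros eps He. destruct (Hg0 eps He) as [N HN]. exists (S N).
    intros n Hn. destruct n; [lia|]. apply HN. lia.
Qed.

Lemma cv_ev (u v : nat -> R) l N : (forall n, (n >= N)%nat -> u n = v n) -> Un_cv v l -> Un_cv u l.
Proof.
  intros He Hv eps Heps. destruct (Hv eps Heps) as [M HM]. exists (max N M).
  intros n Hn. rewrite He by lia. apply HM; lia.
Qed.

Lemma cv_const c : Un_cv (fun _ => c) c.
Proof. intros eps He. exists O. intros. unfold Rdist. rewrite Rminus_diag, Rabs_R0. lra. Qed.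

Lemma cv_inv : Un_cv (fun n => / INR n) 0.
Proof.
  intros eps He. destruct (archimed_cor1 eps He) as [N [HN HN0]]. exists N.
  intros n Hn. unfold Rdist. rewrite Rminus_0_r.
  assert (0 < INR N) by (apply lt_0_INR; lia).
  assert (INR N <= INR n) by (apply le_INR; lia).
  rewrite Rabs_right. 2: { left. apply Rinv_0_lt_compat; lra. }
  eapply Rle_lt_trans; [|exact HN]. apply Rinv_le_contravar; lra.
Qed.

Lemma cv_cdiv c : Un_cv (fun n => c / INR n) 0.
Proof.
  replace 0 with (c * 0) by ring. apply (CV_mult (fun _ => c)); [apply cv_const|apply cv_inv].
Qed.

Lemma cv_nonneg (u : nat -> R) l : (forall n, 0 <= u n) -> Un_cv u l -> 0 <= l.
Proof.
  intros Hp Hu. destruct (Rle_or_lt 0 l) as [h|h]; [exact h|].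
  destruct (Hu (- l) ltac:(lra)) as [N HN]. specialize (HN N (le_n _)).
  unfold Rdist in HN. specialize (Hp N). apply Rabs_def2 in HN. lra.
Qed.

Lemma div_nonneg (m n : nat) : 0 <= INR m / INR n.
Proof.
  destruct n. { simpl. unfold Rdiv. rewrite Rinv_0. lra. }
  apply Rmult_le_pos; [apply pos_INR|]. left. apply Rinv_0_lt_compat, lt_0_INR; lia.
Qed.

Lemma H_bound K m : (1 <= K)%nat -> H m <= INR (Nat.min m K) + INR m / INR K.
Proof.
  intros HK. assert (HKp : 0 < INR K) by (apply lt_0_INR; lia).
  induction m. { simpl. unfold Rdiv. lra. }
  rewrite H_S. assert (Hm : 0 < INR (S m)) by (apply lt_0_INR; lia).
  destruct (le_lt_dec (S m) K) as [h|h].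
  - rewrite Nat.min_l by lia. rewrite Nat.min_l in IHm by lia.
    assert (/ INR (S m) <= 1). { rewrite <- Rinv_1. apply Rinv_le_contravar; [lra|].
      rewrite S_INR. pose proof (pos_INR m); lra. }
    rewrite S_INR in *. unfold Rdiv in *.
    assert (0 <= / INR K) by (left; apply Rinv_0_lt_compat; lra). nra.
  - rewrite Nat.min_r by lia. rewrite Nat.min_r in IHm by lia.
    assert (/ INR (S m) <= / INR K). { apply Rinv_le_contravar; [lra|]. apply le_INR; lia. }
    rewrite S_INR in *. unfold Rdiv in *. nra.
Qed.

Lemma Hdiv (p : nat -> nat) : (exists N, forall n, (n >= N)%nat -> (p n <= n + 1)%nat) ->
  Un_cv (fun n => H (p n) / INR n) 0.
Proof.
  intros [N HN] eps He.
  destruct (archimed_cor1 (eps/4) ltac:(lra)) as [K [HK HK0]].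
  assert (HKp : 0 < INR K) by (apply lt_0_INR; lia).
  destruct (cv_cdiv (INR K) (eps/2) ltac:(lra)) as [N2 HN2].
  exists (max (max N N2) 1). intros n Hn.
  specialize (HN n ltac:(lia)). specialize (HN2 n ltac:(lia)).
  unfold Rdist in *. rewrite Rminus_0_r in *.
  assert (Hnp : 0 < INR n) by (apply lt_0_INR; lia).
  assert (Hn1 : 1 <= INR n) by (replace 1 with (INR 1) by reflexivity; apply le_INR; lia).
  pose proof (H_bound K (p n) ltac:(lia)) as Hb.
  assert (Hmin : INR (Nat.min (p n) K) <= INR K) by (apply le_INR; lia).
  assert (Hpn : INR (p n) <= INR n + 1) by (rewrite <- S_INR; apply le_INR; lia).
  pose proof (H_nonneg (p n)) as Hnn.
  rewrite Rabs_right in HN2 by (left; unfold Rdiv; apply Rmult_lt_0_compat; [lra|apply Rinv_0_lt_compat; lra]).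
  rewrite Rabs_right. 2:{ apply Rle_ge, Rmult_le_pos; [lra|left; apply Rinv_0_lt_compat; lra]. }
  assert (H (p n) <= INR K + (INR n + 1) / INR K).
  { unfold Rdiv in *. assert (0 < / INR K) by (apply Rinv_0_lt_compat; lra). nra. }
  apply (Rmult_lt_reg_r (INR n)); [lra|].
  unfold Rdiv at 1. rewrite Rmult_assoc, Rinv_l, Rmult_1_r by lra.
  assert (HK2 : (INR n + 1) / INR K <= 2 * INR n * / INR K).
  { unfold Rdiv. apply Rmult_le_compat_r; [left; apply Rinv_0_lt_compat; lra| lra]. }
  assert (HK3 : INR K < eps / 2 * INR n).
  { apply (Rmult_lt_compat_r (INR n)) in HN2; [|lra]. unfold Rdiv in HN2.
    rewrite Rmult_assoc, Rinv_l, Rmult_1_r in HN2 by lra. lra. }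
  assert (2 * INR n * / INR K <= eps / 2 * INR n).
  { assert (HK4 : 2 * INR n * / INR K <= 2 * INR n * (eps/4)) by (apply Rmult_le_compat_l; lra). lra. }
  lra.
Qed.

Lemma xlnx_small z : 0 < z <= 1 -> -(2*sqrt z) <= z * ln z <= 0.
Proof.
  intros [Hz Hz1]. pose proof (sqrt_lt_R0 z Hz) as Hs. pose proof (sqrt_sqrt z ltac:(lra)) as Hss.
  split.
  - assert (Hl : ln z = 2 * ln (sqrt z)).
    { rewrite <- Hss at 1. rewrite ln_mult by lra. ring. }
    pose proof (ln_le_m1 (/ sqrt z) ltac:(apply Rinv_0_lt_compat; lra)) as H1.
    rewrite ln_Rinv in H1 by lra. rewrite Hl.
    assert (z * / sqrt z = sqrt z) by (rewrite <- Hss at 1; field; lra).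
    assert (z * ln (sqrt z) >= - (z * / sqrt z)).
    { assert (z * (- ln (sqrt z)) <= z * (/ sqrt z - 1)) by (apply Rmult_le_compat_l; lra). nra. }
    nra.
  - assert (ln z <= 0) by (rewrite <- ln_1; apply ln_mono; lra). nra.
Qed.

Lemma xlnx_pos z : 0 < z -> xlnx z = z * ln z.
Proof. intros. unfold xlnx. destruct (Rle_dec z 0); [lra|reflexivity]. Qed.

Lemma xlnx_0 : xlnx 0 = 0.
Proof. unfold xlnx. destruct (Rle_dec 0 0); [reflexivity|lra]. Qed.

Lemma fcont (u : nat -> R) al : (forall n, 0 <= u n) -> Un_cv u al -> Un_cv (fun n => xlnx (u n)) (xlnx al).
Proof.
  intros Hp Hu. pose proof (cv_nonneg u al Hp Hu) as Ha.
  destruct (Rle_lt_or_eq_dec _ _ Ha) as [Hpos|H0].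
  - destruct (Hu al Hpos) as [N HN].
    apply (cv_ev _ (fun n => u n * ln (u n)) _ N).
    { intros n Hn. specialize (HN n Hn). unfold Rdist in HN. apply Rabs_def2 in HN.
      apply xlnx_pos. lra. }
    rewrite xlnx_pos by lra. apply CV_mult; [exact Hu|].
    apply (continuity_seq ln u al); [|exact Hu].
    apply derivable_continuous_pt. exact (exist _ (/ al) (derivable_pt_lim_ln al Hpos)).
  - subst al. rewrite xlnx_0.
    assert (Hsq : Un_cv (fun n => sqrt (u n)) 0).
    { rewrite <- sqrt_0. apply continuity_seq; [apply continuity_pt_sqrt; lra|exact Hu]. }
    intros eps He. destruct (Hu 1 ltac:(lra)) as [N1 HN1]. destruct (Hsq (eps/2) ltac:(lra)) as [N2 HN2].
    exists (max N1 N2). intros n Hn. specialize (HN1 n ltac:(lia)). specialize (HN2 n ltac:(lia)).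
    unfold Rdist in *. rewrite Rminus_0_r in *. apply Rabs_def2 in HN1. apply Rabs_def2 in HN2.
    specialize (Hp n).
    destruct (Rle_lt_or_eq_dec _ _ Hp) as [hp|hp].
    + rewrite xlnx_pos by lra. pose proof (xlnx_small (u n) ltac:(lra)).
      apply Rabs_def1; lra.
    + rewrite <- hp, xlnx_0, Rabs_R0. lra.
Qed.

Lemma gcomp (m : nat -> nat) al g0 : Un_cv g g0 -> Un_cv (fun n => INR (m n) / INR n) al ->
  Un_cv (fun n => INR (m n) / INR n * g (m n)) (al * g0).
Proof.
  intros Hg Hm. pose proof (cv_nonneg _ al (fun n => div_nonneg (m n) n) Hm) as Ha.
  destruct (Rle_lt_or_eq_dec _ _ Ha) as [Hpos|H0].
  - apply CV_mult; [exact Hm|].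
    intros eps He. destruct (Hg eps He) as [K HK].
    destruct (Hm (al/2) ltac:(lra)) as [N1 HN1].
    assert (HK1 : 0 < INR K + 1) by (pose proof (pos_INR K); lra).
    destruct (archimed_cor1 (al / (2 * (INR K + 1)))) as [N2 [HN2 HN20]].
    { apply Rdiv_lt_0_compat; lra. }
    exists (max N1 N2). intros n Hn. apply HK.
    specialize (HN1 n ltac:(lia)). unfold Rdist in HN1. apply Rabs_def2 in HN1.
    assert (Hn2 : 0 < INR N2) by (apply lt_0_INR; lia).
    assert (Hnn : INR N2 <= INR n) by (apply le_INR; lia).
    assert (Hnp : 0 < INR n) by lra.
    assert (h1 : 2 * (INR K + 1) < al * INR N2).
    { apply (Rmult_lt_compat_r (2 * (INR K + 1) * INR N2)) in HN2; [|nra].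
      field_simplify in HN2; lra. }
    assert (h2 : al / 2 * INR n < INR (m n)).
    { assert (al / 2 < INR (m n) / INR n) by lra.
      apply (Rmult_lt_compat_r (INR n)) in H; [|lra]. unfold Rdiv in H at 2.
      rewrite Rmult_assoc, Rinv_l, Rmult_1_r in H by lra. exact H. }
    assert (INR K < INR (m n)) by nra.
    apply INR_lt in H. lia.
  - subst al. rewrite Rmult_0_l. intros eps He. destruct (Hm eps He) as [N HN].
    exists N. intros n Hn. specialize (HN n Hn). unfold Rdist in *. rewrite Rminus_0_r in *.
    pose proof (g_nonneg (m n)) as g1. pose proof (g_le1 (m n)) as g2. pose proof (div_nonneg (m n) n) as d1.
    rewrite Rabs_right in HN by lra.
    rewrite Rabs_right by (apply Rle_ge; apply Rmult_le_pos; lra). nra.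
Qed.

Lemma Sf_decomp m n : 0 < INR n -> Sf m / INR n =
  xlnx (INR m / INR n) + INR m / INR n * ln (INR n) + INR m / INR n * g m.
Proof.
  intros Hn. destruct m.
  - unfold Sf. simpl INR. unfold Rdiv. rewrite !Rmult_0_l. rewrite xlnx_0. ring.
  - assert (Hm : 0 < INR (S m)) by (apply lt_0_INR; lia).
    rewrite xlnx_pos by (apply Rdiv_lt_0_compat; lra).
    unfold Rdiv. rewrite ln_mult by (try apply Rinv_0_lt_compat; lra).
    rewrite ln_Rinv by lra. unfold Sf, g. field. lra.
Qed.

Lemma keyK (a b c d : nat -> nat) al be ga de N :
  (forall n, (n >= N)%nat -> (a n + b n = c n + d n)%nat) ->
  Un_cv (fun n => INR (a n) / INR n) al ->
  Un_cv (fun n => INR (b n) / INR n) be ->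
  Un_cv (fun n => INR (c n) / INR n) ga ->
  Un_cv (fun n => INR (d n) / INR n) de ->
  Un_cv (fun n => (Sf (a n) + Sf (b n) - Sf (c n) - Sf (d n)) / INR n)
        (xlnx al + xlnx be - xlnx ga - xlnx de).
Proof.
  intros Habcd Ha Hb Hc Hd. destruct g_cv as [g0 Hg].
  assert (Hsum : al + be - ga - de = 0).
  { pose proof (CV_minus _ _ _ _ (CV_minus _ _ _ _ (CV_plus _ _ _ _ Ha Hb) Hc) Hd) as Hs.
    apply (UL_sequence _ _ _ Hs).
    apply (cv_ev _ (fun _ => 0) _ N); [|apply cv_const].
    intros n Hn. specialize (Habcd n Hn).
    assert (E : INR (a n) + INR (b n) = INR (c n) + INR (d n)) by (rewrite <- !plus_INR; f_equal; exact Habcd).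
    unfold Rdiv. replace (INR (a n)) with (INR (c n) + INR (d n) - INR (b n)) by lra. ring. }
  pose proof (fun u al Hu => fcont u al Hu) as F.
  pose proof (CV_minus _ _ _ _ (CV_minus _ _ _ _ (CV_plus _ _ _ _
      (F _ _ (fun n => div_nonneg (a n) n) Ha) (F _ _ (fun n => div_nonneg (b n) n) Hb))
      (F _ _ (fun n => div_nonneg (c n) n) Hc)) (F _ _ (fun n => div_nonneg (d n) n) Hd)) as H1.
  pose proof (CV_minus _ _ _ _ (CV_minus _ _ _ _ (CV_plus _ _ _ _
      (gcomp a al g0 Hg Ha) (gcomp b be g0 Hg Hb)) (gcomp c ga g0 Hg Hc)) (gcomp d de g0 Hg Hd)) as H2.
  pose proof (CV_plus _ _ _ _ H1 H2) as H3. simpl in H3.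
  replace (xlnx al + xlnx be - xlnx ga - xlnx de) with
    (xlnx al + xlnx be - xlnx ga - xlnx de + (al * g0 + be * g0 - ga * g0 - de * g0)).
  2:{ replace (al * g0 + be * g0 - ga * g0 - de * g0) with ((al + be - ga - de) * g0) by ring.
      rewrite Hsum. ring. }
  refine (cv_ev _ _ _ (max N 1) _ H3).
  intros n Hn. specialize (Habcd n ltac:(lia)).
  assert (Hnp : 0 < INR n) by (apply lt_0_INR; lia).
  assert (E : INR (a n) + INR (b n) = INR (c n) + INR (d n)) by (rewrite <- !plus_INR; f_equal; exact Habcd).
  assert (Z : (INR (a n) / INR n + INR (b n) / INR n - INR (c n) / INR n - INR (d n) / INR n) * ln (INR n) = 0).
  { replace (INR (a n) / INR n + INR (b n) / INR n - INR (c n) / INR n - INR (d n) / INR n)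
      with ((INR (a n) + INR (b n) - INR (c n) - INR (d n)) / INR n) by (field; lra).
    rewrite E. unfold Rdiv. ring. }
  replace ((Sf (a n) + Sf (b n) - Sf (c n) - Sf (d n)) / INR n) with
    (Sf (a n) / INR n + Sf (b n) / INR n - Sf (c n) / INR n - Sf (d n) / INR n) by (field; lra).
  rewrite !(Sf_decomp _ n Hnp). lra.
Qed.

Lemma xlnx_1 : xlnx 1 = 0.
Proof. rewrite xlnx_pos by lra. rewrite ln_1. ring. Qed.

Lemma cv_np1 : Un_cv (fun n => INR (n + 1) / INR n) 1.
Proof.
  pose proof (CV_plus _ _ _ _ (cv_const 1) cv_inv) as T. rewrite Rplus_0_r in T.
  refine (cv_ev _ _ _ 1 _ T). cbv beta.
  intros n Hn. assert (0 < INR n) by (apply lt_0_INR; lia). rewrite plus_INR. simpl INR. field. lra.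
Qed.

Lemma cv_np1m (l : nat -> nat) t : (forall n, (1 <= n)%nat -> (l n <= n)%nat) ->
  Un_cv (fun n => INR (l n) / INR n) t -> Un_cv (fun n => INR (n + 1 - l n) / INR n) (1 - t).
Proof.
  intros Hl Ht. replace (1 - t) with (1 + 0 - t) by ring.
  apply (cv_ev _ (fun n => 1 + / INR n - INR (l n) / INR n) _ 1);
    [|apply CV_minus; [apply CV_plus; [apply cv_const|apply cv_inv]|exact Ht]].
  intros n Hn. specialize (Hl n Hn). assert (0 < INR n) by (apply lt_0_INR; lia).
  rewrite minus_INR by lia. rewrite plus_INR. simpl INR. field. lra.
Qed.

Lemma ev_lt (l i : nat -> nat) t x : t < x ->
  Un_cv (fun n => INR (l n) / INR n) t -> Un_cv (fun n => INR (i n) / INR n) x ->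
  exists N, forall n, (n >= N)%nat -> (l n < i n)%nat.
Proof.
  intros Htx Hl Hi. destruct (CV_minus _ _ _ _ Hi Hl (x - t) ltac:(lra)) as [N HN].
  exists (max N 1). intros n Hn. specialize (HN n ltac:(lia)). unfold Rdist in HN.
  apply Rabs_def2 in HN. assert (Hp : 0 < INR n) by (apply lt_0_INR; lia).
  assert (0 < (INR (i n) - INR (l n)) / INR n) by (replace ((INR (i n) - INR (l n)) / INR n) with
     (INR (i n) / INR n - INR (l n) / INR n) by (field; lra); lra).
  assert (0 < INR (i n) - INR (l n)).
  { apply (Rmult_lt_compat_r (INR n)) in H; [|lra]. unfold Rdiv in H.
    rewrite Rmult_0_l, Rmult_assoc, Rinv_l, Rmult_1_r in H by lra. exact H. }
  apply INR_lt. lra.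
Qed.

Theorem proposition5p5 (l i : nat -> nat) (t x : R)
  (hl : forall n : nat, (1 <= n)%nat -> (1 <= l n <= n)%nat)
  (hi : forall n : nat, (1 <= n)%nat -> (1 <= i n <= n)%nat)
  (ht : 0 < t <= 1) (hx : 0 <= x <= 1) (htx : t <> x)
  (hlt : Un_cv (fun n => INR (l n) / INR n) t)
  (hix : Un_cv (fun n => INR (i n) / INR n) x) :
  Un_cv (fun n => Cnli n (l n) (i n)) (Ctx t x).
Proof.
  destruct (Rlt_or_le t x) as [Htx|Hxt].
  - destruct (ev_lt l i t x Htx hlt hix) as [N HN].
    assert (Hiq : Un_cv (fun n => INR (i n - l n) / INR n) (x - t)).
    { apply (cv_ev _ (fun n => INR (i n) / INR n - INR (l n) / INR n) _ N); [|apply CV_minus; assumption].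
      intros n Hn. specialize (HN n Hn). rewrite minus_INR by lia. unfold Rdiv. ring. }
    pose proof (keyK i (fun n => n + 1 - l n)%nat (fun n => n + 1)%nat (fun n => i n - l n)%nat
       x (1 - t) 1 (x - t) (max N 1)) as K.
    specialize (K ltac:(intros n Hn; cbv beta; specialize (HN n ltac:(lia)); specialize (hl n ltac:(lia)); lia)
       hix (cv_np1m l t (fun n Hn => proj2 (hl n Hn)) hlt) cv_np1 Hiq).
    assert (HP : Un_cv (fun n => H ((fun n => n + 1 - l n)%nat n) / INR n) 0).
    { apply Hdiv. exists O. intros n _. lia. }
    assert (HQ : Un_cv (fun n => H ((fun n => i n - l n)%nat n) / INR n) 0).
    { apply Hdiv. exists 1%nat. intros n Hn. specialize (hi n ltac:(lia)). lia. }
    pose proof (CV_minus _ _ _ _ (CV_plus _ _ _ _ (CV_plus _ _ _ _ (CV_minus _ _ _ _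
       (CV_plus _ _ _ _ (cv_const (-1)) (CV_mult _ _ _ _ (cv_const 2) hix)) (cv_cdiv 3))
       (CV_mult _ _ _ _ (cv_const 2) K)) (CV_mult _ _ _ _ (cv_const 4) HP))
       (CV_mult _ _ _ _ (cv_const 4) HQ)) as T.
    replace (Ctx t x) with (-1 + 2 * x - 0 + 2 * (xlnx x + xlnx (1 - t) - xlnx 1 - xlnx (x - t)) + 4 * 0 - 4 * 0).
    2:{ unfold Ctx, Cx. destruct (Rlt_dec t x); [|lra]. rewrite xlnx_1. ring. }
    refine (cv_ev _ _ _ (max N 1) _ T). intros n Hn. cbv beta.
    specialize (HN n ltac:(lia)). pose proof (hl n ltac:(lia)). pose proof (hi n ltac:(lia)).
    rewrite caseA by lia. assert (0 < INR n) by (apply lt_0_INR; lia). field. lra.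
  - assert (Hxt' : x < t) by lra.
    destruct (ev_lt i l x t Hxt' hix hlt) as [N HN].
    assert (Hd : Un_cv (fun n => INR ((fun _ => 0%nat) n) / INR n) 0).
    { apply (cv_ev _ (fun _ => 0) _ O); [|apply cv_const]. intros n _. simpl. unfold Rdiv. ring. }
    pose proof (keyK i (fun n => n + 1 - i n)%nat (fun n => n + 1)%nat (fun _ => 0%nat)
       x (1 - x) 1 0 (max N 1)) as K.
    specialize (K ltac:(intros n Hn; cbv beta; specialize (hi n ltac:(lia)); lia)
       hix (cv_np1m i x (fun n Hn => proj2 (hi n Hn)) hix) cv_np1 Hd).
    pose proof (CV_plus _ _ _ _ (CV_plus _ _ _ _ (cv_const 1) cv_inv) (CV_mult _ _ _ _ (cv_const 2) K)) as T.
    replace (Ctx t x) with (1 + 0 + 2 * (xlnx x + xlnx (1 - x) - xlnx 1 - xlnx 0)).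
    2:{ unfold Ctx, Cx. destruct (Rlt_dec t x); [lra|]. rewrite xlnx_1, xlnx_0. ring. }
    refine (cv_ev _ _ _ (max N 1) _ T). intros n Hn. cbv beta.
    specialize (HN n ltac:(lia)). pose proof (hl n ltac:(lia)). pose proof (hi n ltac:(lia)).
    rewrite caseB by lia. assert (0 < INR n) by (apply lt_0_INR; lia).
    replace (Sf 0) with 0 by (unfold Sf; simpl; ring). field. lra.
Qed.
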